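(* Let $\rho$ be a state of $n$ qubits, $r\ge0$ an integer, $\eta\in(0,1]$. Define $$W_r^*=\inf\Big\{\beta^{-1}\sum_{i\in\mathcal W}\log\operatorname{tr}(\Gamma_i)\ :\ \mathcal W\subseteq\{1,\dots,n\},\ \mathcal E_1,\dots,\mathcal E_r\in\mathcal T,\ \langle0^n|\mathcal E(\rho)|0^n\rangle\ge\eta\Big\},$$ where $\mathcal E=\big(\prod_{i\in\mathcal W}R_i\big)\circ\mathcal E_r\circ\cdots\circ\mathcal E_1$. Then $\beta W_r^*=-D^{r,\eta}_h(\rho\|\Gamma)$, and consequently $$-D^{r,\eta}_H(\rho\|\Gamma)-\log(1/\eta)\le\beta W_r^*\le-D^{r,\eta}_H(\rho\|\Gamma).$$
   Context: All logarithms are natural. Consider $n$ qubits; qubit $i$ has Hamiltonian $H_i$ with $H_i|0\rangle=0$, $H_i|1\rangle=E_i|1\rangle$, $E_i\ge0$. Fix $\beta>0$, and let $\Gamma_i=e^{-\beta H_i}$, $\Gamma=\bigotimes_{i=1}^n\Gamma_i$. Let $\mathcal T$ be a set of completely positive trace-preserving maps on the $n$ qubits, containing the identity map, such that $\mathcal F(\Gamma)=\Gamma$ for every $\mathcal F\in\mathcal T$. $R_i$ denotes the reset of qubit $i$: $R_i(X)=|0\rangle\langle0|_i\otimes\operatorname{tr}_i(X)$. Let $\mathcal P_0=\{\bigotimes_{i=1}^n Q_i: Q_i\in\{|0\rangle\langle0|,\mathbb 1_2\}\}$ and $\mathcal M^r=\{\mathcal E_1^\dagger\cdots\mathcal E_r^\dagger(P):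 P\in\mathcal P_0,\ \mathcal E_j\in\mathcal T\}$ (Hilbert–Schmidt adjoints). For a state $\rho$ and positive semidefinite $\Gamma$: the reduced complexity relative entropy is $D^{r,\eta}_h(\rho\|\Gamma)=-\log\inf\{\operatorname{tr}(Q\Gamma): Q\in\mathcal M^r,\operatorname{tr}(Q\rho)\ge\eta\}$, and the complexity relative entropy is $D^{r,\eta}_H(\rho\|\Gamma)=-\log\inf\{\operatorname{tr}(Q\Gamma)/\operatorname{tr}(Q\rho): Q\in\mathcal M^r,\operatorname{tr}(Q\rho)\ge\eta\}$. *)

(* Defs.v *)
From HB Require Import structures.
From mathcomp Require Import all_boot all_order all_algebra.
From mathcomp Require Import all_classical all_reals all_analysis.
From mathcomp Require Import complex.
Set Implicit Arguments. Unset Strict Implicit. Unset Printing Implicit Defensive.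
Import Order.TTheory GRing.Theory Num.Theory.
Local Open Scope ring_scope.
Local Open Scope complex_scope.
Local Open Scope classical_set_scope.

(* An operator on C^K (K a finite index set = computational basis) is given by
   its matrix entries  A x y = <x|A|y>. *)
Definition opK (R : realType) (K : finType) := K -> K -> R[i].

Definition trK (R : realType) (K : finType) (A : opK R K) : R[i] :=
  \sum_(x : K) A x x.

Definition opmulK (R : realType) (K : finType) (A B : opK R K) : opK R K :=
  fun x y => \sum_(z : K) A x z * B z y.

(* positive semidefinite: <v|A|v> >= 0 for every vector v (in the partial
   order of C, this forces <v|A|v> to be real and nonnegative) *)
Definition psdK (R : realType) (K : finType) (A : opK R K) : Prop :=
  forall v : K -> R[i], 0 <= \sum_(x : K) \sum_(y : K) (v x)^* * A x y * v y.

Definition basis (n : nat) := {ffun 'I_n -> bool}.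
Definition Op (R : realType) (n : nat) := opK R (basis n).
Definition Map (R : realType) (n : nat) := Op R n -> Op R n.

Definition tr (R : realType) (n : nat) (A : Op R n) : R[i] := trK A.
Definition opmul (R : realType) (n : nat) (A B : Op R n) : Op R n := opmulK A B.

Definition zeros (n : nat) : basis n := [ffun => false].

Definition is_state (R : realType) (n : nat) (rho : Op R n) : Prop :=
  psdK rho /\ tr rho = 1.

Definition linear_map (R : realType) (n : nat) (F : Map R n) : Prop :=
  forall (a : R[i]) (X Y : Op R n),
    F (fun x y => a * X x y + Y x y) = (fun x y => a * F X x y + F Y x y).

(* F (x) id_k acting on operators on (n qubits) (x) C^k:
   ((F (x) id)(X))((x,p),(y,q)) = F(X_{pq})(x,y), X_{pq}(x,y) = X((x,p),(y,q)) *)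
Definition ampl (R : realType) (n k : nat) (F : Map R n)
  (X : opK R (prod (basis n) 'I_k)) : opK R (prod (basis n) 'I_k) :=
  fun a b => F (fun x y => X (x, a.2) (y, b.2)) a.1 b.1.

Definition completely_positive (R : realType) (n : nat) (F : Map R n) : Prop :=
  forall (k : nat) (X : opK R (prod (basis n) 'I_k)), psdK X -> psdK (ampl F X).

Definition trace_preserving (R : realType) (n : nat) (F : Map R n) : Prop :=
  forall X : Op R n, tr (F X) = tr X.

Definition CPTP (R : realType) (n : nat) (F : Map R n) : Prop :=
  [/\ linear_map F, completely_positive F & trace_preserving F].

Definition qop (R : realType) := bool -> bool -> R[i].
Definition ket0bra0 (R : realType) : qop R := fun b c => (~~ b && ~~ c)%:R.
Definition id2 (R : realType) : qop R := fun b c => (b == c)%:R.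
Definition qtr (R : realType) (q : qop R) : R[i] := q false false + q true true.

(* Gamma_i = exp(-beta H_i), with H_i = diag(0, E_i) in the basis |0>,|1>,
   hence Gamma_i = diag(1, exp(-beta E_i)) *)
Definition gamma1 (R : realType) (beta Ei : R) : qop R :=
  fun b c => if b == c then (if b then (expR (- (beta * Ei)))%:C else 1) else 0.

Definition tens (R : realType) (n : nat) (qs : 'I_n -> qop R) : Op R n :=
  fun x y => \prod_(i < n) qs i (x i) (y i).

Definition Gamma (R : realType) (n : nat) (beta : R) (E : 'I_n -> R) : Op R n :=
  tens (fun i => gamma1 beta (E i)).

Definition fset_at (n : nat) (x : basis n) (i : 'I_n) (b : bool) : basis n :=
  [ffun j => if j == i then b else x j].

(* R_i(X) = |0><0|_i (x) tr_i(X) *)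
Definition reset (R : realType) (n : nat) (i : 'I_n) : Map R n :=
  fun X x y => @ket0bra0 R (x i) (y i) *
               \sum_(b : bool) X (fset_at x i b) (fset_at y i b).

Definition resetW (R : realType) (n : nat) (W : {set 'I_n}) : Map R n :=
  foldr (fun i F => @reset R n i \o F) id (enum W).

Definition chain (R : realType) (n r : nat) (Es : 'I_r -> Map R n) : Map R n :=
  fun X => foldl (fun Y j => Es j Y) X (enum 'I_r).

(* Hilbert-Schmidt adjoint F^dagger, characterised by
   tr(A^dagger F(B)) = tr(F^dagger(A)^dagger B); explicitly
   F^dagger(A)_{yx} = sum_{ij} A_{ij} conj(F(|y><x|)_{ij}). *)
Definition unitop (R : realType) (n : nat) (y x : basis n) : Op R n :=
  fun a b => ((a == y) && (b == x))%:R.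
Definition hs_adj (R : realType) (n : nat) (F : Map R n) : Map R n :=
  fun A y x => \sum_(i : basis n) \sum_(j : basis n) A i j * (F (@unitop R n y x) i j)^*.

Definition adj_chain (R : realType) (n r : nat) (Es : 'I_r -> Map R n) : Map R n :=
  fun P => foldr (fun j Y => hs_adj (Es j) Y) P (enum 'I_r).

Definition in_P0 (R : realType) (n : nat) (P : Op R n) : Prop :=
  exists qs : 'I_n -> qop R,
    (forall i, qs i = @ket0bra0 R \/ qs i = @id2 R) /\ P = tens qs.

Definition in_Mr (R : realType) (n : nat) (T : Map R n -> Prop) (r : nat)
  (Q : Op R n) : Prop :=
  exists (P : Op R n) (Es : 'I_r -> Map R n),
    [/\ in_P0 P, (forall j, T (Es j)) & Q = adj_chain Es P].

Definition D_h (R : realType) (n : nat) (T : Map R n -> Prop) (r : nat) (eta : R)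
  (rho G : Op R n) : R :=
  - ln (inf [set t : R | exists Q : Op R n,
            [/\ in_Mr T r Q, eta%:C <= tr (opmul Q rho) & t = complex.Re (tr (opmul Q G))]]).

Definition D_H (R : realType) (n : nat) (T : Map R n -> Prop) (r : nat) (eta : R)
  (rho G : Op R n) : R :=
  - ln (inf [set t : R | exists Q : Op R n,
            [/\ in_Mr T r Q, eta%:C <= tr (opmul Q rho) &
                t = complex.Re (tr (opmul Q G) / tr (opmul Q rho))]]).

Definition Wstar (R : realType) (n : nat) (T : Map R n -> Prop) (r : nat) (eta beta : R)
  (E : 'I_n -> R) (rho : Op R n) : R :=
  inf [set w : R | exists (W : {set 'I_n}) (Es : 'I_r -> Map R n),
         [/\ (forall j, T (Es j)),
             eta%:C <= (@resetW R n W (chain Es rho)) (zeros n) (zeros n) &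
             w = beta^-1 * \sum_(i in W) ln (complex.Re (qtr (gamma1 beta (E i))))]].

(* Main.v *)
Require Import Defs.
From HB Require Import structures.
From mathcomp Require Import all_boot all_order all_algebra.
From mathcomp Require Import all_classical all_reals all_analysis.
From mathcomp Require Import complex.
From mathcomp Require Import lra.
Import Order.TTheory GRing.Theory Num.Theory.
Local Open Scope ring_scope.
Local Open Scope complex_scope.
Set Implicit Arguments. Unset Strict Implicit. Unset Printing Implicit Defensive.

Lemma ge0_conj (R : realType) (z : R[i]) : 0 <= z -> z^* = z.
Proof. case: z => a b /ger0_Im /= ->; by rewrite oppr0. Qed.

Lemma sum_delta_r (R : realType) (K : finType) (f : K -> R[i]) (al : R[i]) (a : K) :
  \sum_(y : K) f y * (al * (y == a)%:R) = f a * al.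
Proof.
rewrite (bigD1 a) //= eqxx mulr1 big1 ?addr0 // => y /negbTE ->.
by rewrite mulr0 mulr0.
Qed.

Lemma sum_delta2 (R : realType) (K : finType) (f : K -> R[i]) (al ga : R[i]) (a b : K) :
  \sum_(y : K) f y * (al * (y == a)%:R + ga * (y == b)%:R) = f a * al + f b * ga.
Proof.
under eq_bigr do rewrite mulrDr.
by rewrite big_split /= !sum_delta_r.
Qed.

Lemma quad_delta2 (R : realType) (K : finType) (A : opK R K) (al ga : R[i]) (a b : K) :
  let v := fun x => al * (x == a)%:R + ga * (x == b)%:R in
  \sum_(x : K) \sum_(y : K) (v x)^* * A x y * v y =
  (A a a * al + A a b * ga) * al^* + (A b a * al + A b b * ga) * ga^*.
Proof.
move=> v.
under eq_bigr => x _.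
  rewrite (sum_delta2 (fun y => (v x)^* * A x y)) -!mulrA -mulrDr mulrC.
  rewrite /v rmorphD !rmorphM /= !rmorph_nat.
over.
by rewrite sum_delta2.
Qed.

Lemma psd_diag (R : realType) (K : finType) (A : opK R K) a : psdK A -> 0 <= A a a.
Proof.
move=> /(_ (fun x => 1 * (x == a)%:R + 0 * (x == a)%:R)).
by rewrite quad_delta2 rmorph0 rmorph1 !mulr0 !mulr1 !addr0.
Qed.

Lemma psd_herm (R : realType) (K : finType) (A : opK R K) a b :
  psdK A -> A b a = (A a b)^*.
Proof.
move=> hA.
have ha := ge0_conj (psd_diag a hA).
have hb := ge0_conj (psd_diag b hA).
have h1 := ge0_conj (hA (fun x => 1 * (x == a)%:R + 1 * (x == b)%:R)).
have h2 := ge0_conj (hA (fun x => 1 * (x == a)%:R + 'i * (x == b)%:R)).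
rewrite quad_delta2 in h1; rewrite quad_delta2 in h2.
move: h1 h2 ha hb.
case: (A a a) => [x1 x2]; case: (A a b) => [p1 p2]; case: (A b a) => [q1 q2];
case: (A b b) => [y1 y2] /=.
simpc; move=> [h1] [h2] [hx] [hy].
by apply/eqP; rewrite eq_complex /=; apply/andP; split; apply/eqP; lra.
Qed.


Lemma lin0 (R : realType) n (F : Map R n) : linear_map F ->
  F (fun _ _ => 0) = fun _ _ => 0.
Proof.
move=> hF; have := hF 1 (fun _ _ => 0) (fun _ _ => 0).
have -> : (fun x y : Defs.basis n => (1 : R[i]) * 0 + 0) = (fun _ _ => 0).
  by apply/funext => x; apply/funext => y; rewrite mulr0 addr0.
move=> h; apply/funext => x; apply/funext => y.
have /= e := congr1 (fun G => G x y) h.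
apply: (addrI (F (fun _ _ => 0) x y)); rewrite addr0.
by rewrite {3}e mul1r.
Qed.

Lemma lin_sum (R : realType) n (F : Map R n) (I : Type) (s : seq I)
  (c : I -> R[i]) (X : I -> Op R n) : linear_map F ->
  F (fun a b => \sum_(k <- s) c k * X k a b) =
  fun i j => \sum_(k <- s) c k * F (X k) i j.
Proof.
move=> hF; elim: s => [|k s IH].
  under eq_fun do under eq_fun do rewrite big_nil.
  rewrite lin0 //; apply/funext => x; apply/funext => y; by rewrite big_nil.
under eq_fun do under eq_fun do rewrite big_cons.
rewrite hF IH; apply/funext => x; apply/funext => y; by rewrite big_cons.
Qed.

Lemma op_decomp (R : realType) n (B : Op R n) :
  B = fun a b => \sum_(p : Defs.basis n * Defs.basis n) B p.1 p.2 * unitop R p.1 p.2 a b.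
Proof.
apply/funext => a; apply/funext => b.
rewrite (bigD1 (a, b)) //= /unitop !eqxx mulr1 big1 ?addr0 //.
move=> [y x] /= hne.
by rewrite (eq_sym a) (eq_sym b) -xpair_eqE (negbTE hne) mulr0.
Qed.

Lemma lin_decomp (R : realType) n (F : Map R n) (B : Op R n) i j : linear_map F ->
  F B i j = \sum_(p : Defs.basis n * Defs.basis n) B p.1 p.2 * F (unitop R p.1 p.2) i j.
Proof.
move=> hF; rewrite {1}(op_decomp B) lin_sum //.
Qed.

Lemma sum_prod1 (R : realType) (K : finType) (G : K * 'I_1 -> R[i]) :
  \sum_(a : K * 'I_1) G a = \sum_(x : K) G (x, ord0).
Proof.
transitivity (\sum_(a : K * 'I_1) G (a.1, a.2)); first by apply: eq_bigr => -[].
rewrite -(pair_bigA _ (fun x p => G (x, p))) /=.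
by apply: eq_bigr => x _; rewrite big_ord1.
Qed.

Lemma cp_pos (R : realType) n (F : Map R n) (B : Op R n) :
  completely_positive F -> psdK B -> psdK (F B).
Proof.
move=> hF hB w.
pose X : opK R (prod (Defs.basis n) 'I_1) := fun a b => B a.1 b.1.
have hX : psdK X.
  move=> v; rewrite sum_prod1; under eq_bigr do rewrite sum_prod1.
  exact: (hB (fun x => v (x, ord0))).
have := hF 1%N X hX (fun a => w a.1).
rewrite sum_prod1; under eq_bigr do rewrite sum_prod1.
by [].
Qed.

Lemma tr_adj (R : realType) n (F : Map R n) (A B : Op R n) :
  linear_map F -> completely_positive F -> psdK B ->
  tr (opmul (hs_adj F A) B) = tr (opmul A (F B)).
Proof.
move=> hL hC hB.
rewrite /tr /trK /opmul /opmulK /hs_adj.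
under [RHS]eq_bigr => i _.
  under eq_bigr => j _.
    rewrite (psd_herm _ _ (cp_pos hC hB)) (lin_decomp _ _ _ hL) rmorph_sum mulr_sumr.
    rewrite (eq_bigr (fun p => A i j * B p.2 p.1 * (F (unitop R p.1 p.2) i j)^*)); last first.
      by move=> p _; rewrite rmorphM /= -(psd_herm _ _ hB) mulrA.
  over.
  rewrite exchange_big /=.
over.
rewrite [RHS]exchange_big pair_bigA /=; apply: eq_bigr => -[x z] _ /=.
rewrite mulr_suml; apply: eq_bigr => i _.
rewrite mulr_suml; apply: eq_bigr => j _.
by rewrite mulrAC.
Qed.

Lemma fold_psd (R : realType) n r (Es : 'I_r -> Map R n) (s : seq 'I_r) (X : Op R n) :
  (forall j, CPTP (Es j)) -> psdK X -> psdK (foldl (fun Y j => Es j Y) X s).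
Proof.
move=> hE; elim: s X => [|j s IH] X hX //=.
apply: IH; case: (hE j) => _ hC _; exact: cp_pos.
Qed.

Lemma fold_tr (R : realType) n r (Es : 'I_r -> Map R n) (s : seq 'I_r) (X : Op R n) :
  (forall j, CPTP (Es j)) -> tr (foldl (fun Y j => Es j Y) X s) = tr X.
Proof.
move=> hE; elim: s X => [|j s IH] X //=.
rewrite IH; case: (hE j) => _ _ hT; exact: hT.
Qed.

Lemma fold_fix (R : realType) n r (Es : 'I_r -> Map R n) (s : seq 'I_r) (G : Op R n) :
  (forall j, Es j G = G) -> foldl (fun Y j => Es j Y) G s = G.
Proof.
move=> hE; elim: s => [|j s IH] //=; by rewrite hE.
Qed.

Lemma adj_fold (R : realType) n r (Es : 'I_r -> Map R n) (s : seq 'I_r) (P X : Op R n) :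
  (forall j, CPTP (Es j)) -> psdK X ->
  tr (opmul (foldr (fun j Y => hs_adj (Es j) Y) P s) X) =
  tr (opmul P (foldl (fun Y j => Es j Y) X s)).
Proof.
move=> hE; elim: s X => [|j s IH] X hX //=.
case: (hE j) => hL hC _.
rewrite tr_adj // IH //; exact: cp_pos.
Qed.

Definition qsW (R : realType) n (W : {set 'I_n}) : 'I_n -> qop R :=
  fun i => if i \in W then @id2 R else @ket0bra0 R.

Definition zoff n (W : {set 'I_n}) (x : Defs.basis n) : bool :=
  [forall i, (i \notin W) ==> ~~ x i].

Lemma prodb (R : realType) (I : finType) (P : pred I) :
  \prod_(i : I) ((P i)%:R : R[i]) = ([forall i, P i])%:R.
Proof.
case: (boolP [forall i, P i]) => [/forallP h | /forallPn [i hi]].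
  by rewrite big1 // => i _; rewrite h.
by rewrite (bigD1 i) //= (negbTE hi) mul0r.
Qed.

Lemma tens_qsW (R : realType) n (W : {set 'I_n}) (x z : Defs.basis n) :
  tens (qsW R W) x z = ((x == z)%:R * (zoff W x)%:R : R[i]).
Proof.
rewrite /tens.
rewrite (eq_bigr (fun i => ((x i == z i)%:R : R[i]) * ((i \notin W) ==> ~~ x i)%:R)); last first.
  move=> i _; rewrite /qsW /id2 /ket0bra0.
  by case: (i \in W); case: (x i); case: (z i); rewrite /= ?mulr1 ?mulr0 ?mul0r.
rewrite big_split /= !prodb /zoff; congr (_ * _).
have -> : [forall i, x i == z i] = (x == z).
  apply/forallP/eqP => [h|-> i //].
  by apply/ffunP => i; apply/eqP.
by [].
Qed.

Lemma tr_tens (R : realType) n (W : {set 'I_n}) (Y : Op R n) :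
  tr (opmul (tens (qsW R W)) Y) = \sum_(x : Defs.basis n) (zoff W x)%:R * Y x x.
Proof.
rewrite /tr /trK /opmul /opmulK; apply: eq_bigr => x _.
rewrite (bigD1 x) //= tens_qsW eqxx mul1r big1 ?addr0 // => z hz.
by rewrite tens_qsW eq_sym (negbTE hz) !mul0r.
Qed.

Lemma tr_tens_gamma (R : realType) n (W : {set 'I_n}) (beta : R) (E : 'I_n -> R) :
  tr (opmul (tens (qsW R W)) (Gamma beta E)) = \prod_(i in W) qtr (gamma1 beta (E i)).
Proof.
rewrite tr_tens.
pose F := fun (i : 'I_n) (b : bool) =>
  (((i \notin W) ==> ~~ b)%:R : R[i]) * gamma1 beta (E i) b b.
transitivity (\sum_(x : Defs.basis n) \prod_(i : 'I_n) F i (x i)).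
  apply: eq_bigr => x _; rewrite /F big_split /= prodb; done.
rewrite -(bigA_distr_bigA F) [RHS]big_mkcond /=; apply: eq_bigr => i _.
rewrite big_bool /F /qtr /gamma1 /=.
by case: (i \in W); rewrite /= ?mul1r ?mul0r ?add0r ?addr0 // addrC.
Qed.

Definition agree n (s : seq 'I_n) (z x : Defs.basis n) : bool :=
  [forall j, (j \notin s) ==> (z j == x j)].

Lemma agree_upd n (s : seq 'I_n) i (z x : Defs.basis n) b : i \notin s ->
  agree s z (fset_at x i b) = (z i == b) && agree (i :: s) z x.
Proof.
move=> his; rewrite /agree /fset_at.
apply/forallP/andP => [h|[/eqP hzi /forallP h] j].
  split.
    by have := h i; rewrite his ffunE eqxx.
  apply/forallP => j; apply/implyP; rewrite in_cons negb_or => /andP [hji hjs].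
  by have := h j; rewrite hjs ffunE (negbTE hji).
rewrite ffunE; case: (eqVneq j i) => [->|hji]; first by rewrite hzi eqxx implybT.
apply/implyP => hjs; have := h j; by rewrite in_cons negb_or hji hjs.
Qed.

Lemma reset_eq (R : realType) n i (X : Op R n) x :
  @reset R n i X x x = (~~ x i)%:R * \sum_(b : bool) X (fset_at x i b) (fset_at x i b).
Proof. by rewrite /reset /ket0bra0 andbb. Qed.

Definition rf (R : realType) n (s : seq 'I_n) : Map R n :=
  foldr (fun i F => @reset R n i \o F) id s.

Lemma reset_fold (R : realType) n (s : seq 'I_n) : uniq s ->
  forall (X : Op R n) (x : Defs.basis n),
  rf s X x x =
  (\prod_(i <- s) ((~~ x i)%:R : R[i])) * \sum_(z : Defs.basis n) (agree s z x)%:R * X z z.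
Proof.
elim: s => [|i s IH].
  move=> _ X x; rewrite /= big_nil mul1r (bigD1 x) //= big1.
    rewrite addr0 /agree; have -> : [forall j, (j \notin [::]) ==> (x j == x j)] by apply/forallP => j; rewrite eqxx implybT.
    by rewrite mul1r.
  move=> z hz; have -> : agree [::] z x = false; last by rewrite mul0r.
  apply/negbTE/negP => /forallP h; apply: (negP hz); apply/eqP/ffunP => j.
  by apply/eqP; have := h j.
move=> /andP [his hu] X x.
rewrite (_ : rf (i :: s) X x x = reset i (rf s X) x x) // reset_eq big_cons -mulrA; congr (_ * _).
under [LHS]eq_bigr => b _ do rewrite (IH hu X (fset_at x i b)).
have hp : forall b, \prod_(j <- s) ((~~ fset_at x i b j)%:R : R[i]) = \prod_(j <- s) (~~ x j)%:R.
  move=> b; apply: eq_big_seq => j hj; rewrite /fset_at ffunE.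
  by have -> : (j == i) = false by apply/negbTE; apply: contraNneq his => <-.
under [LHS]eq_bigr => b _ do rewrite hp.
rewrite -mulr_sumr; congr (_ * _).
rewrite exchange_big /=; apply: eq_bigr => z _.
rewrite -mulr_suml; congr (_ * _).
under eq_bigr => b _ do rewrite agree_upd //.
rewrite big_bool /=; by case: (z i); case: (agree (i :: s) z x); rewrite /= ?addr0 ?add0r.
Qed.

Lemma resetW_zeros (R : realType) n (W : {set 'I_n}) (Y : Op R n) :
  @resetW R n W Y (zeros n) (zeros n) = tr (opmul (tens (qsW R W)) Y).
Proof.
change (rf (enum W) Y (zeros n) (zeros n) = tr (opmul (tens (qsW R W)) Y)).
rewrite reset_fold ?enum_uniq // tr_tens big1_seq ?mul1r; last first.
  by move=> i _; rewrite /zeros ffunE.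
apply: eq_bigr => z _; congr (_%:R * _).
congr (nat_of_bool _).
rewrite /agree /zoff; apply/idP/idP => /forallP h; apply/forallP => j; have := h j;
  by rewrite mem_enum /zeros ffunE; case: (z j).
Qed.

Lemma gamma_psd (R : realType) n (beta : R) (E : 'I_n -> R) : psdK (Gamma beta E).
Proof.
move=> v; apply: sumr_ge0 => x _.
rewrite (bigD1 x) //= big1 ?addr0; last first.
  move=> y hy; have : exists i, x i != y i.
    apply/existsP; apply: contraNT hy => /existsPn h; apply/eqP/ffunP => i.
    by have := h i; rewrite negbK => /eqP.
  case=> i hi; rewrite /Gamma /tens (bigD1 i) //= /gamma1 (negbTE hi).
  by rewrite mul0r mulr0 mul0r.
rewrite mulrAC; apply: mulr_ge0; first by rewrite mulrC; exact: mulcJ_ge0.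
apply: prodr_ge0 => i _; rewrite /gamma1 eqxx.
case: (x i) => //; rewrite ler0c; exact: ltW (expR_gt0 _).
Qed.

Lemma tr_tens_le1 (R : realType) n (W : {set 'I_n}) (Y : Op R n) :
  psdK Y -> tr Y = 1 -> tr (opmul (tens (qsW R W)) Y) <= 1.
Proof.
move=> hY h1; rewrite tr_tens; apply: (@le_trans _ _ (tr Y)); last by rewrite h1.
rewrite /tr /trK; apply: ler_sum => x _.
case: (zoff W x); rewrite ?mul1r ?mul0r //; exact: psd_diag.
Qed.

Lemma ket0_id2 (R : realType) : @ket0bra0 R <> @id2 R.
Proof.
move=> h; have := congr1 (fun q => q true true) h; rewrite /ket0bra0 /id2 /=.
by move/eqP; rewrite eq_sym oner_eq0.
Qed.

Lemma inf_eq_min (R : realType) (S : set R) (m : R) :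
  S m -> (forall x, S x -> m <= x) -> inf S = m.
Proof.
move=> hm hlb; apply/le_anti/andP; split.
  apply: (ge_inf _ hm); exists m => x; exact: hlb.
apply: lb_le_inf; first by exists m.
move=> x; exact: hlb.
Qed.

Unset Implicit Arguments.

Theorem theoremE1 (R : realType) (n : nat) (E : 'I_n -> R) (beta : R)
  (T : Map R n -> Prop) (rho : Op R n) (r : nat) (eta : R) :
  (forall i, 0 <= E i) -> 0 < beta ->
  (forall F, T F -> CPTP F) -> T id ->
  (forall F, T F -> F (Gamma beta E) = Gamma beta E) ->
  is_state rho -> 0 < eta <= 1 ->
  beta * Wstar T r eta beta E rho = - D_h T r eta rho (Gamma beta E) /\
  - D_H T r eta rho (Gamma beta E) - ln (1 / eta) <= beta * Wstar T r eta beta E rho /\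
  beta * Wstar T r eta beta E rho <= - D_H T r eta rho (Gamma beta E).
Proof.
move=> hE0 hb hT hid hfix [hrpsd hrtr] /andP [he0 he1].
set G := Gamma beta E.
have hG : psdK G := gamma_psd beta E.
pose g i := 1 + expR (- (beta * E i)).
have hg : forall i, 0 < g i by move=> i; apply: addr_gt0 => //; exact: expR_gt0.
have hq : forall i, qtr (gamma1 beta (E i)) = (g i)%:C.
  by move=> i; rewrite /qtr /gamma1 /= /g rmorphD rmorph1.
pose cost (W : {set 'I_n}) := \sum_(i in W) ln (complex.Re (qtr (gamma1 beta (E i)))).
have hcost : forall W, cost W = \sum_(i in W) ln (g i).
  by move=> W; apply: eq_bigr => i _; rewrite hq.
pose PW W := expR (cost W).
have hPW : forall W, (PW W)%:C = \prod_(i in W) qtr (gamma1 beta (E i)).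
  move=> W; rewrite /PW hcost expR_sum rmorph_prod; apply: eq_bigr => i _.
  by rewrite lnK ?posrE // hq.
have hCP : forall Es : 'I_r -> Map R n, (forall j, T (Es j)) -> forall j, CPTP (Es j).
  by move=> Es h j; apply: hT.
have K1 : forall W (Es : 'I_r -> Map R n), (forall j, T (Es j)) ->
    tr (opmul (adj_chain Es (tens (qsW R W))) rho) = resetW W (chain Es rho) (zeros n) (zeros n).
  by move=> W Es hEs; rewrite resetW_zeros /adj_chain (adj_fold _ _ (hCP _ hEs) hrpsd).
have K2 : forall W (Es : 'I_r -> Map R n), (forall j, T (Es j)) ->
    tr (opmul (adj_chain Es (tens (qsW R W))) G) = (PW W)%:C.
  move=> W Es hEs; rewrite /adj_chain (adj_fold _ _ (hCP _ hEs) hG) fold_fix.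
    by rewrite tr_tens_gamma hPW.
  by move=> j; apply: hfix.
have K3 : forall W (Es : 'I_r -> Map R n), (forall j, T (Es j)) ->
    resetW W (chain Es rho) (zeros n) (zeros n) <= 1.
  move=> W Es hEs; rewrite resetW_zeros; apply: tr_tens_le1.
    exact: fold_psd (hCP _ hEs) hrpsd.
  by rewrite /chain fold_tr ?hrtr //; exact: hCP.
have K4 : forall Q, in_Mr T r Q -> exists W (Es : 'I_r -> Map R n),
    (forall j, T (Es j)) /\ Q = adj_chain Es (tens (qsW R W)).
  move=> Q [P [Es [[qs [hqs ->]] hEs ->]]].
  exists [set i | `[< qs i = @id2 R >]], Es; split => //.
  congr (adj_chain Es _); apply/funext => x; apply/funext => y; rewrite /tens.
  apply: eq_bigr => i _; rewrite /qsW inE; case: (hqs i) => ->.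
    by have -> : `[< @ket0bra0 R = @id2 R >] = false by apply/asboolPn/ket0_id2.
  by rewrite asboolT.
have K5 : forall W (Es : 'I_r -> Map R n), (forall j, T (Es j)) ->
    in_Mr T r (adj_chain Es (tens (qsW R W))).
  move=> W Es hEs; exists (tens (qsW R W)), Es; split => //.
  exists (qsW R W); split => // i; rewrite /qsW; case: (i \in W); [right|left] => //.
pose feas W := exists Es : 'I_r -> Map R n,
  (forall j, T (Es j)) /\ eta%:C <= resetW W (chain Es rho) (zeros n) (zeros n).
have fT : feas [set: 'I_n].
  exists (fun _ => id); split => //.
  rewrite /chain fold_fix // resetW_zeros tr_tens.
  have hz : forall x, zoff [set: 'I_n] x by move=> x; apply/forallP => i; rewrite inE.
  rewrite (_ : \sum_x _ = tr rho); last by apply: eq_bigr => x _; rewrite hz mul1r.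
  by rewrite hrtr lecE /= eqxx he1.
have [Ws /asboolP [Es0 [hEs0 hfe0]] hmin] :=
  @arg_minP _ _ {set 'I_n} [set: 'I_n] (fun W => `[< feas W >]) cost (asboolT fT).
pose m := PW Ws.
have hm0 : 0 < m by apply: expR_gt0.
have hmW : forall W, feas W -> m <= PW W.
  move=> W hW; rewrite /m /PW ler_expR; exact: hmin W (asboolT hW).
have hWs : Wstar T r eta beta E rho = beta^-1 * cost Ws.
  rewrite /Wstar; apply: inf_eq_min.
    by exists Ws, Es0; split.
  move=> w [W [Es [hEs hfe ->]]]; apply: ler_wpM2l; first by rewrite invr_ge0 ltW.
  apply: (hmin W); apply: asboolT; by exists Es.
have hDh : D_h T r eta rho G = - ln m.
  rewrite /D_h; congr (- ln _); apply: inf_eq_min.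
    exists (adj_chain Es0 (tens (qsW R Ws))); split; first exact: K5.
      by rewrite K1.
    by rewrite K2.
  move=> t [Q [hQ hQr ->]]; have [W [Es [hEs hQe]]] := K4 Q hQ.
  rewrite hQe K2 //=; apply: hmW; exists Es; split => //; by rewrite -K1 // -hQe.
have Kb : forall (p : R) (b : R[i]), 0 < p -> eta%:C <= b -> b <= 1 ->
    p <= complex.Re (p%:C / b) /\ complex.Re (p%:C / b) <= p / eta.
  move=> p [a c] hp; rewrite !lecE /= => /andP [/eqP hc hea] /andP [_ ha1].
  have c0 : c = 0 by move/eqP: hc; rewrite eq_sym => /eqP.
  have ha0 : 0 < a by apply: lt_le_trans hea.
  have -> : a / (a ^+ 2 + c ^+ 2) = a^-1.
    by rewrite c0 expr0n addr0 invfM mulrA divff ?mul1r // gt_eqF.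
  rewrite c0 mul0r subr0; split.
    apply: ler_peMr; first exact: ltW.
    by rewrite invr_ge1 ?unitfE ?gt_eqF.
  apply: ler_wpM2l; first exact: ltW.
  by rewrite lef_pV2 ?posrE.
have hDH : exists h, [/\ m <= h, h <= m / eta & D_H T r eta rho G = - ln h].
  rewrite /D_H; match goal with |- context [ln (inf ?S)] => exists (inf S) end.
  have hb0 := hfe0; rewrite -K1 // in hb0.
  have hel : forall t, [set t : R | exists Q : Op R n,
            [/\ in_Mr T r Q, eta%:C <= tr (opmul Q rho) &
                t = complex.Re (tr (opmul Q G) / tr (opmul Q rho))]]%classic t -> m <= t.
    move=> t [Q [hQ hQr ->]]; have [W [Es [hEs hQe]]] := K4 Q hQ.
    rewrite hQe in hQr *; rewrite K2 //.
    have hle := K3 W Es hEs; rewrite -K1 // in hle.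
    have [h1 _] := Kb (PW W) _ (expR_gt0 _) hQr hle.
    apply: le_trans h1; apply: hmW; exists Es; split => //; by rewrite -K1.
  have hmem : [set t : R | exists Q : Op R n,
            [/\ in_Mr T r Q, eta%:C <= tr (opmul Q rho) &
                t = complex.Re (tr (opmul Q G) / tr (opmul Q rho))]]%classic
        (complex.Re (tr (opmul (adj_chain Es0 (tens (qsW R Ws))) G) /
                     tr (opmul (adj_chain Es0 (tens (qsW R Ws))) rho))).
    by exists (adj_chain Es0 (tens (qsW R Ws))); split => //; exact: K5.
  split => //.
    apply: lb_le_inf; first by eexists; exact: hmem.
    by move=> t; apply: hel.
  apply: le_trans (ge_inf _ hmem) _; first by exists m => t; apply: hel.
  have hle := K3 Ws Es0 hEs0; rewrite -K1 // in hle.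
  rewrite K2 //; have [_ h2] := Kb m _ hm0 hb0 hle; exact: h2.
have [h [hmh hhm ->]] := hDH.
have hh0 : 0 < h by apply: lt_le_trans hmh.
have hlm : ln m = cost Ws by rewrite /m /PW expRK.
rewrite hWs hDh !opprK mulrA divff ?mul1r ?gt_eqF // -hlm; split => //.
split; last by rewrite ler_ln ?posrE.
have : ln h <= ln (m / eta) by rewrite ler_ln ?posrE ?divr_gt0.
rewrite ln_div ?posrE // lnV ?posrE // opprK => H; move: H; generalize (ln h) (ln m) (ln eta) => x y z; lra.
Qed.
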